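(* For every integer $n\ge 2$, $$ \frac{1}{3}\left(2^{n-1}+\frac{5+(-1)^n}{2}2^{\lfloor n/2\rfloor-1}+\frac{-1+(-1)^n+2(-1)^{\lfloor (n+1)/2\rfloor n}}{2}\right) =\sum_{d=0}^{\lfloor (n-2)/2\rfloor}\left(F_{n-d-1}^{(d)}+\frac{1+(-1)^{nd}}{2}F^{(\lfloor d/2\rfloor)}_{\lfloor n/2\rfloor-\lfloor (d+1)/2\rfloor}\right). $$
   Context: $F_0,F_1,F_2,\dots=0,1,1,2,3,5,\dots$ is the Fibonacci sequence, and the convolved Fibonacci sequences are defined by $F_m^{(0)}=F_m$ and $F_m^{(c+1)}=\sum_{i=0}^{m}F_iF_{m-i}^{(c)}$ for $m\ge 0$, $c\ge 0$. *)

(* Defs.v *)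
From HB Require Import structures.
From mathcomp Require Import all_boot all_order all_algebra.
Set Implicit Arguments. Unset Strict Implicit. Unset Printing Implicit Defensive.

Fixpoint fib (m : nat) : nat :=
  match m with
  | 0 => 0
  | 1 => 1
  | (p.+1 as q).+1 => fib q + fib p
  end.

Fixpoint cfib (c m : nat) : nat :=
  match c with
  | 0 => fib m
  | c'.+1 => \sum_(i < m.+1) fib i * cfib c' (m - i)
  end.

Lemma cfib_test : [:: cfib 1 0; cfib 1 1; cfib 1 2; cfib 1 3; cfib 1 4] = [:: 0; 0; 1; 2; 5].
Proof. by rewrite /= !big_ord_recr !big_ord0. Qed.

(* Main.v *)
Require Import Defs.
From mathcomp Require Import all_boot all_order all_algebra.
From mathcomp Require Import zify ring lra.
Import GRing.Theory Num.Theory.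

Lemma cfibE c m : cfib c.+1 m = \sum_(0 <= i < m.+1) fib i * cfib c (m - i).
Proof. by rewrite big_mkord. Qed.

Lemma cfib_small c m : (m <= c)%N -> cfib c m = 0%N.
Proof.
elim: c m => [|c IH] m hm; first by move: hm; rewrite leqn0 => /eqP ->.
rewrite cfibE big_nat_cond big1 // => -[|i] _ //.
by rewrite IH ?muln0 //; lia.
Qed.

Lemma cfib_rec c m : cfib c.+1 m.+2 = (cfib c.+1 m.+1 + cfib c.+1 m + cfib c m.+1)%N.
rewrite !cfibE big_nat_recl // big_nat_recl // [in X in (X + _ + _)%N]big_nat_recl //.
rewrite mul0n add0n mul0n add0n mul1n subn1.
have -> : \sum_(0 <= i < m.+1) fib i.+2 * cfib c (m.+2 - i.+2)
   = \sum_(0 <= i < m.+1) (fib i.+1 * cfib c (m.+1 - i.+1) + fib i * cfib c (m - i)).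
  by apply: eq_bigr => i _; rewrite !subSS mulnDl.
rewrite big_split /=; lia.
Qed.

Lemma cfib_rec' c m :
  cfib c.+1 m = (cfib c.+1 m.-1 + cfib c.+1 m.-2 + cfib c m.-1)%N.
Proof.
case: m => [|[|m]]; last exact: cfib_rec.
  by rewrite (cfib_small c.+1 0) // (cfib_small c 0).
by rewrite (cfib_small c.+1 1) // (cfib_small c.+1 0) // (cfib_small c 0).
Qed.

Definition B n := \sum_(0 <= d < n.+1) cfib d (n - d).

Lemma B_rec n : B n.+2 = (B n.+1 + 2 * B n)%N.
Proof.
have E1 : B n.+2 = (fib n.+2 + \sum_(0 <= d < n.+2) cfib d.+1 (n.+1 - d))%N.
  by rewrite /B big_nat_recl // subn0.
have E2 : B n.+1 = (fib n.+1 + \sum_(0 <= d < n.+1) cfib d.+1 (n - d))%N.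
  by rewrite /B big_nat_recl // subn0.
have E3 : B n = (fib n + \sum_(0 <= d < n) cfib d.+1 (n - d.+1))%N.
  by rewrite /B big_nat_recl // subn0.
rewrite E1.
have -> : \sum_(0 <= d < n.+2) cfib d.+1 (n.+1 - d)
  = (\sum_(0 <= d < n.+2) cfib d.+1 (n - d) + \sum_(0 <= d < n.+2) cfib d.+1 (n - d.+1)
     + \sum_(0 <= d < n.+2) cfib d (n - d))%N.
  rewrite -!big_split; apply: eq_bigr => d _.
  rewrite cfib_rec'; congr (_ + _ + _)%N; congr (cfib _ _); lia.
have Z1 : \sum_(0 <= d < n.+2) cfib d.+1 (n - d) = \sum_(0 <= d < n.+1) cfib d.+1 (n - d).
  by rewrite big_nat_recr // (@cfib_small _ (_ - _)) ?Monoid.mulm1 //; lia.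
have Z2 : \sum_(0 <= d < n.+2) cfib d.+1 (n - d.+1) = \sum_(0 <= d < n) cfib d.+1 (n - d.+1).
  rewrite big_nat_recr // (@cfib_small _ (_ - _)) ?Monoid.mulm1 //; last lia.
  by rewrite big_nat_recr // (@cfib_small _ (_ - _)) ?Monoid.mulm1 //; lia.
have Z3 : \sum_(0 <= d < n.+2) cfib d (n - d) = B n.
  by rewrite big_nat_recr // (@cfib_small _ (_ - _)) ?Monoid.mulm1 //; lia.
rewrite Z1 Z2 Z3.
rewrite E2 E3 /=; lia.
Qed.

Lemma B_closed n : (3 * B n + ~~ odd n = 2 ^ n + odd n)%N.
Proof.
suff : (3 * B n + ~~ odd n = 2 ^ n + odd n)%N /\ (3 * B n.+1 + ~~ odd n.+1 = 2 ^ n.+1 + odd n.+1)%N by case.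
elim: n => [|n [IH1 IH2]].
  by split; rewrite /B !big_nat_recr // ?big_geq // ?(cfib_small 1 0).
split=> //.
rewrite B_rec !oddS !expnS; rewrite oddS expnS in IH2.
move: IH1 IH2; case: (odd n) => /=; lia.
Qed.

Lemma ext_sum (f : nat -> nat) m N : (m <= N)%N ->
  (forall d, (m <= d)%N -> (d < N)%N -> f d = 0%N) ->
  \sum_(0 <= d < N) f d = \sum_(0 <= d < m) f d.
Proof.
move=> h1 h2; rewrite (big_cat_nat (leq0n m) h1) /=.
have -> : \sum_(m <= i < N) f i = 0%N.
  by rewrite big_nat_cond big1 // => d /andP[/andP[a b] _]; exact: h2.
by rewrite addn0.
Qed.

Lemma LA M N : (0 < N)%N -> (M <= N)%N -> (N <= M.*2.+1)%N ->
  \sum_(0 <= d < M) cfib d (N - d - 1) = B N.-1.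
Proof.
move=> h0 h1 h2; rewrite /B prednK // (@ext_sum _ M N) //.
  by apply: eq_bigr => d _; congr (cfib _ _); lia.
move=> d a b; apply: cfib_small; lia.
Qed.

Lemma pair_sum (f : nat -> nat) k :
  \sum_(0 <= d < k.*2) f d = \sum_(0 <= e < k) (f e.*2 + f e.*2.+1)%N.
Proof.
elim: k => [|k IH]; first by rewrite !big_geq.
by rewrite doubleS !big_nat_recr //= IH addnA.
Qed.

Lemma half_d1 e : (e.*2.+1)./2 = e.
Proof. by rewrite -[e.*2.+1]/(true + e.*2)%N half_bit_double. Qed.

Lemma half_d2 e : (e.*2.+2)./2 = e.+1.
Proof. by rewrite -[e.*2.+2]/((e.+1).*2) doubleK. Qed.

Lemma vanish K d : (K <= d)%N -> cfib d./2 (K - (d.+1)./2) = 0%N.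
Proof.
move=> h; apply: cfib_small.
have := odd_double_half d; rewrite -uphalfE uphalf_half.
case: (odd d) => /= H; lia.
Qed.

Lemma LE j : \sum_(0 <= d < j.+1) cfib d./2 (j.+1 - (d.+1)./2) = (B j.+1 + B j)%N.
Proof.
rewrite -(@ext_sum _ j.+1 (j.+1).*2); last 2 first.
- lia.
- by move=> d h _; apply: vanish.
rewrite pair_sum big_split /= /B.
have -> : \sum_(0 <= d < j.+2) cfib d (j.+1 - d) = \sum_(0 <= d < j.+1) cfib d (j.+1 - d).
  by rewrite big_nat_recr // subnn (cfib_small _ 0) // Monoid.mulm1.
congr (_ + _)%N; apply: eq_bigr => e _.
  by rewrite doubleK uphalf_double.
by rewrite uphalf_double doubleK subSS.
Qed.

Lemma LO j : \sum_(0 <= d < j.+1) (~~ odd d) * cfib d./2 (j.+1 - (d.+1)./2) = B j.+1.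
Proof.
rewrite -(@ext_sum _ j.+1 (j.+1).*2); last 2 first.
- lia.
- by move=> d h _; rewrite vanish // muln0.
rewrite pair_sum /B.
have -> : \sum_(0 <= d < j.+2) cfib d (j.+1 - d) = \sum_(0 <= d < j.+1) cfib d (j.+1 - d).
  by rewrite big_nat_recr // subnn (cfib_small _ 0) // Monoid.mulm1.
apply: eq_bigr => e _.
by rewrite oddS odd_double half_d1 half_d2 doubleK /= mul0n addn0 mul1n.
Qed.

Local Open Scope ring_scope.

Lemma Bq m : (B m)%:R = ((2 : rat) ^+ m - (-1) ^+ m) / 3.
Proof.
have := B_closed m => /(congr1 (fun x => x%:R : rat)).
rewrite !natrD natrX -signr_odd.
case: (odd m) => /= H; rewrite ?expr1 ?expr0;
  move: H; set x := (B m)%:R; set p := (2 : rat) ^+ m => H; lra.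
Qed.

Lemma sgn m : (-1) ^+ m = (if odd m then -1 else 1) :> rat.
Proof. by rewrite -signr_odd; case: (odd m). Qed.

Theorem corollary1 (n : nat) (hn : (2 <= n)%N) :
  3^-1 * ((2 : rat) ^+ (n - 1)
          + (5 + (-1) ^+ n) / 2 * 2 ^+ (n./2 - 1)
          + (-1 + (-1) ^+ n + 2 * (-1) ^+ ((n.+1)./2 * n)) / 2)
  = \sum_(0 <= d < ((n - 2)./2).+1)
      ((cfib d (n - d - 1))%:R
       + (1 + (-1) ^+ (n * d)) / 2 * (cfib d./2 (n./2 - (d.+1)./2))%:R).
Proof.
have [j [-> | ->]] : exists j, n = j.*2.+2 \/ n = j.*2.+3.
  exists (n./2).-1; have := odd_double_half n; case: (odd n) => /= H; [right|left]; lia.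
- rewrite half_d2 (_ : (j.*2.+2 - 2)./2 = j); last by rewrite (_ : (j.*2.+2 - 2 = j.*2)%N) ?doubleK //; lia.
  rewrite big_split /= -natr_sum (@LA j.+1 j.*2.+2) //; try lia.
  have F i : (1 + (-1) ^+ (j.*2.+2 * i)) / 2 = 1 :> rat.
    by rewrite sgn oddM /= odd_double /=; lra.
  under eq_bigr => i _ do rewrite F mul1r.
  rewrite -natr_sum LE natrD !Bq uphalf_double.
  rewrite (_ : (j.*2.+2 - 1 = j.*2.+1)%N); last lia.
  rewrite (_ : (j.+1 - 1 = j)%N); last lia.
  rewrite /= !sgn !oddM /= !odd_double /=.
  rewrite -!muln2 !exprS !exprM.
  set p := (2 : rat) ^+ j.
  by case: (odd j) => /=; field.
have h3 : (j.*2.+3)./2 = j.+1 by rewrite -[j.*2.+3]/((j.+1).*2.+1) half_d1.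
have h4 : (j.*2.+4)./2 = j.+2 by rewrite -[j.*2.+4]/((j.+1).*2.+2) half_d2.
rewrite h3 h4 (_ : (j.*2.+3 - 2)./2 = j); last by rewrite (_ : (j.*2.+3 - 2 = j.*2.+1)%N) ?half_d1 //; lia.
rewrite big_split /= -natr_sum (@LA j.+1 j.*2.+3) //; try lia.
have F i : (1 + (-1) ^+ (j.*2.+3 * i)) / 2 = (~~ odd i)%:R :> rat.
  by rewrite sgn oddM /= odd_double /=; case: (odd i) => /=; lra.
under eq_bigr => i _ do rewrite F -natrM.
rewrite -natr_sum LO !Bq.
rewrite (_ : (j.*2.+3 - 1 = j.*2.+2)%N); last lia.
rewrite (_ : (j.+1 - 1 = j)%N); last lia.
rewrite /= !sgn !oddM /= !odd_double /=.
rewrite -!muln2 !exprS !exprM.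
set p := (2 : rat) ^+ j.
by case: (odd j) => /=; field.
Qed.
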